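(* Let $p$ be a prime, $u_1>u_2\ge 1$ integers, $s_1=p^{u_1}$, $s_2=p^{u_2}$, $F=\mathrm{GF}(s_1)$ and $G=\mathrm{GF}(s_2)$ represented as below, and let $\delta$ be either the truncation projection $\phi$ or the modulus projection $\varphi$. If $D$ is a difference matrix $D(b,c,s_1)$ with entries in $F$ (over the additive group of $F$), then $\delta(D)$ is a difference matrix $D(b,c,s_2)$ over the additive group of $G$.
   Context: $F$ is represented as the set of polynomials over $\mathrm{GF}(p)$ of degree less than $u_1$ with arithmetic modulo an irreducible polynomial $p_1(x)$ of degree $u_1$; $G$ is represented as the polynomials over $\mathrm{GF}(p)$ of degree less than $u_2$ with arithmetic modulo an irreducible polynomial $p_2(x)$ of degree $u_2$. The truncation projection is $\phi(a_0+a_1x+\cdots+a_{u_1-1}x^{u_1-1})=a_0+\cdots+a_{u_2-1}x^{u_2-1}$; the modulus projection is $\varphi(f(x))=f(x)\bmod p_2(x)$. For an array $D$, $\delta(D)$ denotes entrywise application of $\delta$. A difference matrix $D(b,c,g)$ over a finite abelian group of order $g$ is a $b\times c$ array with entries in the group such that, for any two distinct columns, their entrywise difference contains every group element equally often. *)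

(* Defs.v *)
From mathcomp Require Import all_boot all_order all_algebra.
Set Implicit Arguments. Unset Strict Implicit. Unset Printing Implicit Defensive.
Import GRing.Theory.
Local Open Scope ring_scope.

(* The elements of GF(p^u) in the polynomial representation: polynomials over
   GF(p) of degree < u, i.e. of size <= u (the zero polynomial has size 0). *)
Definition polyrep (p u : nat) : pred {poly 'F_p} :=
  fun f => (size f <= u)%N.

Definition trunc_proj (p u2 : nat) (f : {poly 'F_p}) : {poly 'F_p} :=
  \poly_(i < u2) f`_i.

Definition mod_proj (p : nat) (p2 : {poly 'F_p}) (f : {poly 'F_p}) : {poly 'F_p} :=
  f %% p2.

Definition is_diff_matrix (p b c : nat) (S : pred {poly 'F_p})
    (D : 'I_b -> 'I_c -> {poly 'F_p}) : Prop :=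
  (forall i j, S (D i j)) /\
  (forall j j' : 'I_c, j != j' ->
     forall x y, S x -> S y ->
       #|[set i : 'I_b | D i j - D i j' == x]| =
       #|[set i : 'I_b | D i j - D i j' == y]|).

(* Main.v *)
Require Import Defs.
From mathcomp Require Import all_boot all_order all_algebra.
Local Open Scope ring_scope.
Import GRing.Theory.

Section Gen.
Variables (p u1 u2 b c : nat).
Variable delta : {poly 'F_p} -> {poly 'F_p}.
Hypothesis hle : (u2 <= u1)%N.
Hypothesis hD : forall a e, delta (a + e) = delta a + delta e.
Hypothesis hN : forall a, delta (- a) = - delta a.
Hypothesis hid : forall a : {poly 'F_p}, (size a <= u2)%N -> delta a = a.
Hypothesis hS : forall a, (size (delta a) <= u2)%N.

Local Notation T := {poly_u1 'F_p}.

Lemma sizeD_le (a e : {poly 'F_p}) n : (size a <= n)%N -> (size e <= n)%N ->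
  (size (a + e)%R <= n)%N.
Proof. by move=> ha he; rewrite (leq_trans (size_polyD _ _)) // geq_max ha he. Qed.

Lemma sizeB_le (a e : {poly 'F_p}) n : (size a <= n)%N -> (size e <= n)%N ->
  (size (a - e)%R <= n)%N.
Proof. by move=> ha he; apply: sizeD_le => //; rewrite size_polyN. Qed.

Definition tof (a : {poly 'F_p}) : T := insubd (@npoly0 'F_p u1) a.

Lemma tofK (a : {poly 'F_p}) : (size a <= u1)%N -> val (tof a) = a.
Proof. by move=> h; rewrite /tof val_insubd ifT. Qed.

Lemma fib_le (x y : {poly 'F_p}) : (size x <= u2)%N -> (size y <= u2)%N ->
  (#|[set t : T | delta (val t) == x]| <= #|[set t : T | delta (val t) == y]|)%N.
Proof.
move=> hx hy.
have hc : (size (y - x)%R <= u1)%N by apply: sizeB_le; apply: leq_trans hle.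
pose h (t : T) := tof (val t + (y - x)).
have hv t : val (h t) = val t + (y - x).
  by rewrite tofK //; apply: sizeD_le => //; exact: size_npoly.
have hinj : injective h.
  by move=> t1 t2 /(congr1 val); rewrite !hv => /addIr /val_inj.
rewrite -(card_imset _ hinj); apply: subset_leq_card; apply/subsetP => z.
case/imsetP => t; rewrite inE => /eqP ht ->; rewrite inE hv hD hD hN ht.
by rewrite !hid // addrC subrK.
Qed.

Lemma count_eq (d : 'I_b -> {poly 'F_p}) (N : nat) :
  (forall i, (size (d i) <= u1)%N) ->
  (forall z : {poly 'F_p}, (size z <= u1)%N -> #|[set i | d i == z]| = N) ->
  forall x, #|[set i | delta (d i) == x]| = (#|[set t : T | delta (val t) == x]| * N)%N.
Proof.
move=> hd hN' x.
rewrite -sum1_card.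
rewrite (partition_big (fun i => tof (d i)) (fun t : T => delta (val t) == x)); last first.
  by move=> i; rewrite inE tofK.
rewrite -sum1_card big_distrl /=.
apply: eq_big => [t|t /eqP ht]; first by rewrite inE.
rewrite mul1n -(hN' (val t) (size_npoly _)) -sum1_card.
apply: eq_bigl => i; rewrite !inE.
apply/idP/idP.
  by case/andP=> _ /eqP <-; rewrite tofK.
move/eqP=> e; rewrite e ht eqxx /=; apply/eqP/val_inj; rewrite tofK -e //.
Qed.

Lemma gen (D : 'I_b -> 'I_c -> {poly 'F_p}) :
  is_diff_matrix (@polyrep p u1) D ->
  is_diff_matrix (@polyrep p u2) (fun i j => delta (D i j)).
Proof.
case=> hin hdm; split => [i j|j j' hjj' x y hx hy]; first exact: hS.
have e i : delta (D i j) - delta (D i j') = delta (D i j - D i j') by rewrite hD hN.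
have E (z : {poly 'F_p}) : [set i | delta (D i j) - delta (D i j') == z] =
    [set i | delta (D i j - D i j') == z] by apply/setP => i; rewrite !inE e.
rewrite !E.
have hd i : (size (D i j - D i j')%R <= u1)%N by apply: sizeB_le; apply: hin.
have hN0 (z : {poly 'F_p}) : (size z <= u1)%N ->
    #|[set i | D i j - D i j' == z]| = #|[set i | D i j - D i j' == 0]|.
  by move=> hz; apply: hdm => //; rewrite /polyrep size_poly0.
rewrite !(@count_eq _ _ hd hN0); congr (_ * _)%N.
by apply/eqP; rewrite eqn_leq !fib_le.
Qed.
End Gen.

Theorem lemma5 (p u1 u2 b c : nat) (p1 p2 : {poly 'F_p})
  (D : 'I_b -> 'I_c -> {poly 'F_p}) (delta : {poly 'F_p} -> {poly 'F_p}) :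
  prime p -> (u2 < u1)%N -> (1 <= u2)%N ->
  irreducible_poly p1 -> size p1 = u1.+1 ->
  irreducible_poly p2 -> size p2 = u2.+1 ->
  (delta = trunc_proj u2 \/ delta = mod_proj p2) ->
  is_diff_matrix (@polyrep p u1) D ->
  is_diff_matrix (@polyrep p u2) (fun i j => delta (D i j)).
Proof.
move=> _ hlt _ _ _ _ hs2 [->|->]; apply: gen; rewrite ?(ltnW hlt) //.
- by move=> a e; apply/polyP => i; rewrite /trunc_proj !(coef_poly, coefD); case: ifP; rewrite ?addr0.
- by move=> a; apply/polyP => i; rewrite /trunc_proj !(coef_poly, coefN); case: ifP; rewrite ?oppr0.
- move=> a ha; apply/polyP => i; rewrite /trunc_proj coef_poly; case: ltnP => // hi.
  by rewrite nth_default // (leq_trans ha hi).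
- by move=> a; rewrite /trunc_proj size_poly.
- by move=> a e; rewrite /mod_proj modpD.
- by move=> a; rewrite /mod_proj modpN.
- by move=> a ha; rewrite /mod_proj modp_small // hs2 ltnS.
- move=> a; rewrite /mod_proj -ltnS -hs2 ltn_modp -size_poly_eq0 hs2 //.
Qed.
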